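(* Let $d_h,d_b\ge1$ and $d=2d_h+d_b+2$. There exists a single-layer Transformer encoder (with linear maps $Q,K,V:\mathbb{Q}^d\to\mathbb{Q}^d$, an FFN $O$, residual connections, and final linear maps $K^{(1)},V^{(1)}$) such that for every $n\ge1$ and every $s_1,\dots,s_n\in\mathbb{Q}^{d_b}$, on input the sequence $x_i=[0_{d_h},s_i,0_{d_h},i,1]$, $i=1,\dots,n$, it outputs $(K^e,V^e)$ with $K^e=(k_1,\dots,k_n)$, $V^e=(v_1,\dots,v_n)$, where $k_i=[0_{d_h},0_{d_b},0_{d_h},-1,i]$ and $v_i=[0_{d_h},s_i,0_{d_h},0,0]$.
   Context: Vectors in $\mathbb{Q}^d$ are written as concatenations of blocks, $[\cdot,\cdot,\dots]$; $0_k$ is the zero vector of length $k$. A single-layer encoder with parameters $Q,K,V,O$ maps $(x_1,\dots,x_n)$ to $z_i=O(a_i)+a_i$ where $a_i=\mathrm{Att}(Q(x_i),K(X),V(X))+x_i$, and $\mathrm{Att}(q,K,V)=\sum_i\alpha_iv_i$ with $(\alpha_i)=\mathrm{hardmax}(f^{att}(q,k_1),\dots,f^{att}(q,k_n))$ ($\mathrm{hardmax}$ puts equal weight $1/r$ on the $r$ maximizing coordinates, $0$ elsewhere) for a scoring function $f^{att}$ (e.g. $-|\langle q,k\rangle|$). The FFN $O$ uses the saturated linear activation $\sigma(x)=\min(1,\max(0,x))$. The encoder outputs $K^e=K^{(1)}(Z)$, $V^e=V^{(1)}(Z)$ applied coordinatewise to $Z=(z_1,\dots,z_n)$. *)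

(* Defs.v *)
From HB Require Import structures.
From mathcomp Require Import all_boot all_order all_algebra.
Set Implicit Arguments. Unset Strict Implicit. Unset Printing Implicit Defensive.
Import Order.TTheory GRing.Theory Num.Theory.
Local Open Scope ring_scope.

(* d = 2 d_h + d_b + 2, written as the block sum dh + db + dh + 1 + 1 *)
Definition tdim (dh db : nat) : nat := (dh + db + dh + 1 + 1)%N.

Definition blk (dh db : nat) (a : 'rV[rat]_dh) (b : 'rV[rat]_db) (c : 'rV[rat]_dh)
  (e f : rat) : 'rV[rat]_(tdim dh db) :=
  row_mx (row_mx (row_mx (row_mx a b) c) (e%:M : 'rV[rat]_1)) (f%:M : 'rV[rat]_1).

Definition sigma (x : rat) : rat := Num.min 1 (Num.max 0 x).

Record ffn (d : nat) := FFN {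
  ffn_m : nat;
  ffn_W1 : 'M[rat]_(d, ffn_m);
  ffn_b1 : 'rV[rat]_ffn_m;
  ffn_W2 : 'M[rat]_(ffn_m, d);
  ffn_b2 : 'rV[rat]_d }.

Definition ffn_apply d (O : ffn d) (x : 'rV[rat]_d) : 'rV[rat]_d :=
  map_mx sigma (x *m ffn_W1 O + ffn_b1 O) *m ffn_W2 O + ffn_b2 O.

Definition fatt d (q k : 'rV[rat]_d) : rat := - `|(q *m k^T) 0 0|.

Definition hardmax n (f : 'I_n -> rat) (j : 'I_n) : rat :=
  let S := [set i | [forall k, f k <= f i]] in
  (j \in S)%:R / #|S|%:R.

Definition Att d n (q : 'rV[rat]_d) (Ks Vs : 'I_n -> 'rV[rat]_d) : 'rV[rat]_d :=
  \sum_(j < n) hardmax (fun i => fatt q (Ks i)) j *: Vs j.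

Record encoder (d : nat) := Encoder {
  enc_Q : 'M[rat]_d; enc_K : 'M[rat]_d; enc_V : 'M[rat]_d;
  enc_O : ffn d;
  enc_K1 : 'M[rat]_d; enc_V1 : 'M[rat]_d }.

Definition enc_a d (E : encoder d) n (X : 'I_n -> 'rV[rat]_d) (i : 'I_n) : 'rV[rat]_d :=
  Att (X i *m enc_Q E) (fun j => X j *m enc_K E) (fun j => X j *m enc_V E) + X i.

Definition enc_z d (E : encoder d) n (X : 'I_n -> 'rV[rat]_d) (i : 'I_n) : 'rV[rat]_d :=
  ffn_apply (enc_O E) (enc_a E X i) + enc_a E X i.

Definition enc_Ke d (E : encoder d) n (X : 'I_n -> 'rV[rat]_d) (i : 'I_n) :=
  enc_z E X i *m enc_K1 E.
Definition enc_Ve d (E : encoder d) n (X : 'I_n -> 'rV[rat]_d) (i : 'I_n) :=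
  enc_z E X i *m enc_V1 E.

(* Main.v *)
Require Import Defs.
From HB Require Import structures.
From mathcomp Require Import all_boot all_order all_algebra.
Import Order.TTheory GRing.Theory Num.Theory.
Local Open Scope ring_scope.

Definition O0 d : ffn d := @FFN d 0 0 0 0 0.

Lemma ffn_O0 d x : ffn_apply (O0 d) x = 0.
Proof. by rewrite /ffn_apply /= [map_mx _ _]thinmx0 mul0mx addr0. Qed.

Theorem lemma1 (dh db : nat) (hdh : (0 < dh)%nat) (hdb : (0 < db)%nat) :
  exists E : encoder (tdim dh db),
    forall (n : nat), (0 < n)%nat ->
    forall s : 'I_n -> 'rV[rat]_db,
    let X := fun i : 'I_n => blk (0 : 'rV_dh) (s i) (0 : 'rV_dh) (i.+1)%:R 1 in
    forall i : 'I_n,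
      enc_Ke E X i = blk (0 : 'rV_dh) (0 : 'rV_db) (0 : 'rV_dh) (-1) (i.+1)%:R /\
      enc_Ve E X i = blk (0 : 'rV_dh) (s i) (0 : 'rV_dh) 0 0.
Proof.
pose M1 : 'M[rat]_(1, tdim dh db) := blk 0 0 0 0 1.
pose M2 : 'M[rat]_(1, tdim dh db) := blk 0 0 0 (-1) 0.
pose K1 : 'M[rat]_(tdim dh db) := col_mx (col_mx (col_mx (col_mx 0 0) 0) M1) M2.
pose P : 'M[rat]_(db, tdim dh db) := row_mx (row_mx (row_mx (row_mx 0 1%:M) 0) 0) 0.
pose V1 : 'M[rat]_(tdim dh db) := col_mx (col_mx (col_mx (col_mx 0 P) 0) 0) 0.
exists (Encoder 0 0 0 (O0 _) K1 V1) => n _ s X i.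
have HZ : enc_z (Encoder 0 0 0 (O0 _) K1 V1) X i = X i.
  rewrite /enc_z ffn_O0 add0r /enc_a /Att /=.
  rewrite big1 ?add0r // => j _.
  by rewrite !mulmx0 scaler0.
rewrite /enc_Ke /enc_Ve HZ /X /blk /K1 /V1 /=; split.
- rewrite !mul_row_col !mulmx0 !add0r !mul_scalar_mx scale1r /M1 /M2 /blk.
  rewrite !scale_row_mx ?scaler0 !add_row_mx.
  by rewrite !addr0 !scale_scalar_mx mulr0 mulr1 -!raddfD /= add0r addr0.
- rewrite !mul_row_col !mulmx0 !add0r !addr0 /P !mul_mx_row !mulmx0 mulmx1.
  by rewrite ?raddf0.
Qed.
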